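(* Let $\alpha\ge1$. Any outcome that satisfies $\alpha$-proportional fairness is in the $\left(\gamma,\frac{\gamma(\alpha+1)}{\gamma-1}\right)$-transferable core for every $\gamma>1$.
   Context: Let $(\mathcal X,d)$ be a metric space, $N=[n]$ a set of agents and $C$ a set of candidates located in $\mathcal X$, $k\in\mathbb N^+$; an outcome is $W\subseteq C$ with $|W|\le k$; $d(i,W)=\min_{c\in W}d(i,c)$. $\alpha$-proportional fairness: there is no group $N'\subseteq N$ with $|N'|\ge n/k$ and candidate $c\in C\setminus W$ such that $\alpha\, d(i,c)<d(i,W)$ for all $i\in N'$. $(\gamma,\alpha)$-transferable core: $W$ is in it if there is no group $N'\subseteq N$ and candidate $c\in C\setminus W$ with $|N'|\ge\gamma n/k$ and $\alpha\sum_{i\in N'}d(i,c)<\sum_{i\in N'}d(i,W)$. *)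

(* Defs.v *)
From mathcomp Require Import all_boot all_order all_algebra.
Set Implicit Arguments. Unset Strict Implicit. Unset Printing Implicit Defensive.
Import Order.TTheory GRing.Theory Num.Theory.
Local Open Scope ring_scope.

Definition is_metric (R : realFieldType) (X : Type) (d : X -> X -> R) : Prop :=
  [/\ (forall x y, 0 <= d x y),
      (forall x y, d x y = 0 <-> x = y),
      (forall x y, d x y = d y x) &
      (forall x y z, d x z <= d x y + d y z)].

(* d(i, W) = min_{c in W} d(i, c), for a nonempty W (0 returned for W = set0,
   never used: the theorem assumes W nonempty). *)
Definition dist_set (R : realFieldType) (X : Type) (d : X -> X -> R)
  (A C : finType) (agent : A -> X) (cand : C -> X) (W : {set C}) (i : A) : R :=
  match [pick c in W] with
  | Some c0 => \big[Order.min/d (agent i) (cand c0)]_(c in W) d (agent i) (cand c)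
  | None => 0
  end.

Definition prop_fair (R : realFieldType) (X : Type) (d : X -> X -> R)
  (A C : finType) (agent : A -> X) (cand : C -> X) (k : nat) (alpha : R)
  (W : {set C}) : Prop :=
  ~ exists (N' : {set A}) (c : C),
      [/\ (#|A|%:R / k%:R <= (#|N'|%:R : R)), c \notin W &
          forall i, i \in N' ->
            alpha * d (agent i) (cand c) < dist_set d agent cand W i].

Definition transferable_core (R : realFieldType) (X : Type) (d : X -> X -> R)
  (A C : finType) (agent : A -> X) (cand : C -> X) (k : nat) (gamma alpha : R)
  (W : {set C}) : Prop :=
  ~ exists (N' : {set A}) (c : C),
      [/\ (gamma * #|A|%:R / k%:R <= (#|N'|%:R : R)), c \notin W &
          alpha * (\sum_(i in N') d (agent i) (cand c))
            < \sum_(i in N') dist_set d agent cand W i].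

(* Main.v *)
Require Import Defs.
From mathcomp Require Import all_boot all_order all_algebra.
From mathcomp Require Import ring lra.
Import Order.TTheory GRing.Theory Num.Theory.
Local Open Scope ring_scope.

Lemma dist_le (R : realFieldType) (X : Type) (d : X -> X -> R)
  (A C : finType) (agent : A -> X) (cand : C -> X) (W : {set C}) i w :
  w \in W -> dist_set d agent cand W i <= d (agent i) (cand w).
Proof.
move=> wW; rewrite /dist_set; case: pickP => [c0 c0W|/(_ w)]; last by rewrite wW.
exact: bigmin_le_cond.
Qed.

Lemma dist_ex (R : realFieldType) (X : Type) (d : X -> X -> R)
  (A C : finType) (agent : A -> X) (cand : C -> X) (W : {set C}) i :
  W != set0 -> exists2 w, w \in W & d (agent i) (cand w) <= dist_set d agent cand W i.
Proof.
case/set0Pn => w0 w0W; rewrite /dist_set; case: pickP => [c0 c0W|/(_ w0)]; last by rewrite w0W.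
case: (arg_minP (fun w => d (agent i) (cand w)) c0W) => w wW Hw.
exists w => //; apply/bigmin_geP; split; first exact: Hw.
by move=> j jW; apply: Hw.
Qed.

Theorem theorem3 (R : realFieldType) (X : Type) (d : X -> X -> R)
  (A C : finType) (agent : A -> X) (cand : C -> X) (k : nat)
  (alpha : R) (W : {set C}) :
  is_metric d -> (0 < k)%N -> 1 <= alpha ->
  W != set0 -> (#|W| <= k)%N ->
  prop_fair d agent cand k alpha W ->
  forall gamma : R, 1 < gamma ->
    transferable_core d agent cand k gamma (gamma * (alpha + 1) / (gamma - 1)) W.
Proof.
move=> [d0 _ dsym dtri] k0 a1 Wn0 _ PF gamma g1 [N' [c [hsz hc hlt]]].
set dist := dist_set d agent cand W in hlt.
set P := fun i => alpha * d (agent i) (cand c) < dist i.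
set S := [set i in N' | P i].
set T := N' :\: S.
have SN : S \subset N' by apply/subsetP => i; rewrite inE => /andP[].
have hS : (#|S|%:R : R) < #|A|%:R / k%:R.
  rewrite ltNge; apply/negP => h; apply: PF; exists S, c; split => //.
  by move=> i; rewrite inE => /andP[].
have kpos : (0 : R) < k%:R by rewrite ltr0n.
have hcard : (#|N'| = #|S| + #|T|)%N.
  by rewrite /T -(cardsID S N') (setIidPr SN).
have hsg : gamma * #|S|%:R < (#|N'|%:R : R).
  apply: lt_le_trans hsz; rewrite -mulrA ltr_pM2l //; lra.
have tpos : (0 : R) < #|T|%:R.
  move: hsg; rewrite hcard natrD => hsg.
  have : (0 : R) <= #|S|%:R by [].
  nra.
have [j0 j0T] : exists j0, j0 \in T.
  by apply/set0Pn; rewrite -card_gt0 -(ltr0n R).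
case: (arg_minP (fun j => d (agent j) (cand c)) j0T) => jm jmT Hjm.
set m := d (agent jm) (cand c).
have dT j : j \in T -> dist j <= alpha * d (agent j) (cand c).
  rewrite !inE => /andP[]; rewrite negb_and => /orP[/negP nj jN|]; first by exfalso.
  by rewrite /P -leNgt.
have dS i : dist i <= d (agent i) (cand c) + (1 + alpha) * m.
  case: (@dist_ex _ _ d _ _ agent cand W jm Wn0) => w wW hw.
  apply: le_trans (@dist_le _ _ d _ _ agent cand W i _ wW) _.
  have h1 := dtri (agent i) (cand c) (cand w).
  have h2 := dtri (cand c) (agent jm) (cand w).
  have h3 := dT _ jmT.
  have h4 := dsym (cand c) (agent jm). rewrite /m. rewrite -/dist in hw. lra.
have sumN (F : A -> R) : \sum_(i in N') F i = \sum_(i in S) F i + \sum_(i in T) F i.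
  rewrite (bigID (fun i => i \in S)) /=; congr (_ + _).
    by apply: eq_bigl => i; rewrite andb_idl // => /(subsetP SN).
  by apply: eq_bigl => i; rewrite /T !inE andbC.
move: hlt; rewrite !sumN.
set a := \sum_(i in S) d (agent i) (cand c). set b := \sum_(i in T) d (agent i) (cand c).
have ha : 0 <= a by apply: sumr_ge0.
have hm : 0 <= m by exact: d0.
have hb : #|T|%:R * m <= b.
  rewrite mulr_natl -sumr_const; apply: ler_sum => j jT; exact: Hjm.
have hdS : \sum_(i in S) dist i <= a + #|S|%:R * ((1 + alpha) * m).
  rewrite mulr_natl -sumr_const -big_split /=; apply: ler_sum => i _; exact: dS.
have hdT : \sum_(i in T) dist i <= alpha * b.
  rewrite /b mulr_sumr; apply: ler_sum => j jT; exact: dT.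
move: hsg; rewrite hcard natrD => hsg.
set s := (#|S|%:R : R) in hsg hdS. set t := (#|T|%:R : R) in hsg hb tpos.
have hs0 : 0 <= s by rewrite /s ler0n.
have key : s * (1 + alpha) * m * (gamma - 1) <= (1 + alpha) * b.
  have e1 : (gamma - 1) * s <= t by lra.
  have e2 : 0 <= (1 + alpha) * m by apply: mulr_ge0 => //; lra.
  have e3 := ler_wpM2r e2 e1.
  have e4 : (1 + alpha) * (t * m) <= (1 + alpha) * b by apply: ler_wpM2l => //; lra.
  have e5 : t * ((1 + alpha) * m) = (1 + alpha) * (t * m) by ring.
  have e6 : s * (1 + alpha) * m * (gamma - 1) = (gamma - 1) * s * ((1 + alpha) * m) by ring.
  rewrite e6; rewrite e5 in e3; exact: le_trans e3 e4.
set beta := gamma * (alpha + 1) / (gamma - 1).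
have hbeta : beta * (gamma - 1) = gamma * (alpha + 1).
  rewrite /beta mulfVK //; lra.
move=> hlt.
have hb0 : 0 <= b by apply: sumr_ge0 => i _; exact: d0.
set Y := \sum_(i in S) dist i + \sum_(i in T) dist i in hlt.
have hY : Y <= a + s * ((1 + alpha) * m) + alpha * b by rewrite /Y; lra.
have g0 : 0 < gamma - 1 by lra.
have h1 : (gamma - 1) * (beta * (a + b)) < (gamma - 1) * Y by rewrite ltr_pM2l.
have h2 : (gamma - 1) * (beta * (a + b)) = gamma * (alpha + 1) * (a + b).
  by rewrite -hbeta; ring.
have h3 : (gamma - 1) * Y <= (gamma - 1) * (a + s * ((1 + alpha) * m) + alpha * b).
  by rewrite ler_pM2l.
have h4 : (gamma - 1) * (a + s * ((1 + alpha) * m) + alpha * b) =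
   (gamma - 1) * a + s * (1 + alpha) * m * (gamma - 1) + (gamma - 1) * alpha * b by ring.
have h5 : (gamma - 1) * a <= gamma * (alpha + 1) * a.
  by apply: ler_wpM2r => //; nra.
have h6 : (gamma - 1) * alpha * b + (1 + alpha) * b <= gamma * (alpha + 1) * b.
  have -> : (gamma - 1) * alpha * b + (1 + alpha) * b = (gamma * alpha + 1) * b by ring.
  by apply: ler_wpM2r => //; nra.
lra.
Qed.
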